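(* Let $J\subset\mathbb{R}\setminus\{0\}$ be compact. Then there is a constant $C>0$ such that \[ \Big|\int_y^1e^{-i\varphi(x,\alpha)}dx\Big|\le C(1-y)^3 \] for all $y\in[0,1)$ and all $\alpha\in J$.
   Context: For $\alpha\in\mathbb{R}\setminus\{0\}$ and $y\in(-1,1)$, $\varphi(y,\alpha):=-\frac{2\alpha}{(1-y)^2}+\frac{2\alpha}{1-y}-\frac{2}{\alpha}\log(1-y)$. *)

(* Defs.v *)
From Stdlib Require Import Reals.
From Coquelicot Require Import Coquelicot.
Open Scope R_scope.

Definition phi (y alpha : R) : R :=
  - (2 * alpha) / (1 - y) ^ 2 + (2 * alpha) / (1 - y) - (2 / alpha) * ln (1 - y).

Definition expi (t : R) : C := (cos t, sin t).

(* Main.v *)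
Require Import Defs.
From Stdlib Require Import Reals Rtopology Lra Psatz Classical.
From Coquelicot Require Import Coquelicot.
Open Scope R_scope.
Definition Nf a s := -2*(a*a) + a*a*s + s*s.
Definition uu a x := a*(1-x)^3/(2*Nf a (1-x)).
Definition du a x := - a*(1-x)^2*(3*Nf a (1-x) - (1-x)*(a*a+2*(1-x)))/(2*(Nf a (1-x))^2).

Lemma abs_div_le X Y Z : Rabs X <= Z * Rabs Y -> Y <> 0 -> Rabs (X / Y) <= Z.
Proof.
intros H HY. unfold Rdiv. rewrite Rabs_mult, Rabs_inv.
assert (0 < Rabs Y) by (apply Rabs_pos_lt; auto).
apply (Rmult_le_reg_r (Rabs Y)); auto. rewrite Rmult_assoc, Rinv_l by lra. lra.
Qed.

Lemma Nf_bound a m s : 0 < m -> m <= Rabs a -> 0 < s -> s <= 1 -> s <= m/2 ->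
  -2*(a*a) <= Nf a s <= -(a*a)/2.
Proof.
intros Hm Ha Hs1 Hs2 Hs3. unfold Nf.
assert (a*a = Rabs a * Rabs a) by (rewrite <- Rabs_mult; rewrite Rabs_right; nra).
split; nra.
Qed.

Lemma uu_bound a m x : 0 < m -> m <= Rabs a -> 0 < 1-x -> 1-x <= 1 -> 1-x <= m/2 ->
  Rabs (uu a x) <= (1-x)^3 * /m.
Proof.
intros Hm Ha Hs1 Hs2 Hs3. set (s := 1-x) in *.
pose proof (Nf_bound a m s Hm Ha Hs1 Hs2 Hs3) as [N1 N2].
assert (HA : a*a = Rabs a * Rabs a) by (rewrite <- Rabs_mult; rewrite Rabs_right; nra).
unfold uu. fold s. apply abs_div_le.
- rewrite Rabs_mult. rewrite (Rabs_right (s^3)) by (apply Rle_ge; apply pow_le; lra).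
  rewrite (Rabs_left (2 * Nf a s)) by nra.
  set (mi := /m). assert (Hmi : m * mi = 1) by (unfold mi; field; lra).
  assert (0 < mi) by (unfold mi; apply Rinv_0_lt_compat; lra).
  assert (Rabs a <= mi * (a*a)) by (rewrite HA; nra).
  assert (0 < s^3) by (apply pow_lt; lra).
  assert (mi * (a*a) <= mi * (-(2 * Nf a s))) by (apply Rmult_le_compat_l; lra).
  assert (Rabs a <= mi * (-(2 * Nf a s))) by lra.
  assert (Rabs a * s^3 <= mi * (-(2 * Nf a s)) * s^3) by (apply Rmult_le_compat_r; lra).
  lra.
- nra.
Qed.

Lemma du_bound a m x : 0 < m -> m <= Rabs a -> 0 < 1-x -> 1-x <= 1 -> 1-x <= m/2 ->
  Rabs (du a x) <= (14 * /m + 4 * /m^3) * (1-x)^2.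
Proof.
intros Hm Ha Hs1 Hs2 Hs3. set (s := 1-x) in *.
pose proof (Nf_bound a m s Hm Ha Hs1 Hs2 Hs3) as [N1 N2].
assert (HA : a*a = Rabs a * Rabs a) by (rewrite <- Rabs_mult; rewrite Rabs_right; nra).
set (mi := /m). assert (Hmi : m * mi = 1) by (unfold mi; field; lra).
assert (0 < mi) by (unfold mi; apply Rinv_0_lt_compat; lra).
replace (/m^3) with (mi^3) by (unfold mi; field; lra).
unfold du. fold s. set (N := Nf a s) in *. apply abs_div_le.
- rewrite (Rabs_right (2 * N^2)) by nra.
  assert (HX : Rabs (3 * N - s * (a * a + 2 * s)) <= 7*(a*a) + 2).
  { apply Rabs_le. split; nra. }
  rewrite !Rabs_mult. rewrite Rabs_Ropp.
  rewrite (Rabs_right (s^2)) by nra.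
  set (A := Rabs a) in *.
  assert (HmA : 1 <= mi * A) by nra.
  assert (H4 : (a*a)*(a*a) <= 4 * N^2) by nra.
  assert (Hb1 : A * (7*(a*a)+2) <= (7*mi + 2*mi^3) * ((a*a)*(a*a))).
  { rewrite HA. assert (1 <= (mi*A)^3) by (apply pow_R1_Rle; lra).
    assert (0 <= A) by (unfold A; apply Rabs_pos).
    assert (A*A*A * 1 <= A*A*A * (mi*A)) by (apply Rmult_le_compat_l; [apply Rmult_le_pos; [apply Rmult_le_pos|];lra | lra]).
    assert (A * 1 <= A * (mi*A)^3) by (apply Rmult_le_compat_l; lra).
    replace ((7 * mi + 2 * mi ^ 3) * (A * A * (A * A))) with (7 * (A*A*A * (mi*A)) + 2 * (A * (mi*A)^3)) by ring.
    lra. }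
  assert (0 <= s^2) by nra.
  assert (0 <= Rabs (3 * N - s * (a * a + 2 * s))) by apply Rabs_pos.
  assert (0 <= A) by (unfold A; apply Rabs_pos).
  assert (S1 : A * s^2 * Rabs (3 * N - s * (a * a + 2 * s)) <= A * s^2 * (7*(a*a)+2)).
  { apply Rmult_le_compat_l; [apply Rmult_le_pos|]; lra. }
  assert (S2 : s^2 * (A * (7*(a*a)+2)) <= s^2 * ((7 * mi + 2 * mi ^ 3) * (a * a * (a * a)))).
  { apply Rmult_le_compat_l; lra. }
  assert (S3 : (s^2 * (7 * mi + 2 * mi ^ 3)) * (a * a * (a * a)) <= (s^2 * (7 * mi + 2 * mi ^ 3)) * (4 * N^2)).
  { apply Rmult_le_compat_l; [apply Rmult_le_pos; [lra|] |lra].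
    assert (0 < mi^3) by (apply pow_lt; lra). lra. }
  replace ((14 * mi + 4 * mi ^ 3) * s ^ 2 * (2 * N ^ 2)) with ((s^2 * (7 * mi + 2 * mi ^ 3)) * (4 * N^2)) by ring.
  replace (A * s ^ 2 * (7 * (a * a) + 2)) with (s^2 * (A * (7*(a*a)+2))) in S1 by ring.
  replace (s ^ 2 * ((7 * mi + 2 * mi ^ 3) * (a * a * (a * a)))) with ((s^2 * (7 * mi + 2 * mi ^ 3)) * (a * a * (a * a))) in S2 by ring.
  lra.
- assert (0 < a*a) by nra. assert (N < 0) by lra. intro HH. nra.
Qed.
Definition dph a x := -4*a/(1-x)^3 + 2*a/(1-x)^2 + 2/(a*(1-x)).

Lemma der_phi a x : a <> 0 -> x < 1 -> is_derive (fun x => phi x a) x (dph a x).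
Proof.
intros Ha Hx. unfold phi, dph. auto_derive.
- repeat split; try lra; intro H; nra.
- field. split; auto. lra.
Qed.

Lemma der_uu a x : a <> 0 -> x < 1 -> Nf a (1-x) <> 0 -> is_derive (uu a) x (du a x).
Proof.
intros Ha Hx HN. unfold uu, du. unfold Nf in *. auto_derive.
- auto.
- field. auto.
Qed.

Lemma uu_dph a x : a <> 0 -> x < 1 -> Nf a (1-x) <> 0 -> uu a x * dph a x = 1.
Proof.
intros Ha Hx HN. unfold uu, dph. unfold Nf in *. field. repeat split; auto; lra.
Qed.

Lemma is_derive_eq (f : R -> R) x l l' : is_derive f x l -> l = l' -> is_derive f x l'.
Proof. intros H ->; exact H. Qed.

Lemma der1 a x : a <> 0 -> x < 1 -> Nf a (1-x) <> 0 ->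
  is_derive (fun x => uu a x * sin (phi x a)) x (cos (-(phi x a)) + du a x * sin (phi x a)).
Proof.
intros Ha Hx HN.
eapply is_derive_eq.
- apply (is_derive_mult (uu a) (fun x => sin (phi x a))).
  + apply der_uu; auto.
  + apply (is_derive_comp sin (fun x => phi x a)). apply is_derive_sin. apply der_phi; auto.
  + intros; apply Rmult_comm.
- simpl. rewrite cos_neg. pose proof (uu_dph a x Ha Hx HN).
  unfold plus, mult, scal; simpl. unfold mult; simpl. rewrite <- Rmult_assoc, H. ring.
Qed.

Lemma der2 a x : a <> 0 -> x < 1 -> Nf a (1-x) <> 0 ->
  is_derive (fun x => uu a x * cos (phi x a)) x (sin (-(phi x a)) + du a x * cos (phi x a)).
Proof.
intros Ha Hx HN.
eapply is_derive_eq.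
- apply (is_derive_mult (uu a) (fun x => cos (phi x a))).
  + apply der_uu; auto.
  + apply (is_derive_comp cos (fun x => phi x a)). apply is_derive_cos. apply der_phi; auto.
  + intros; apply Rmult_comm.
- simpl. rewrite sin_neg. pose proof (uu_dph a x Ha Hx HN).
  unfold plus, mult, scal; simpl. unfold mult; simpl. rewrite <- Rmult_assoc, H. ring.
Qed.

Lemma cont1 a x : a <> 0 -> x < 1 -> Nf a (1-x) <> 0 ->
  continuous (fun x => cos (-(phi x a)) + du a x * sin (phi x a)) x /\
  continuous (fun x => du a x * sin (phi x a)) x /\
  continuous (fun x => sin (-(phi x a)) + du a x * cos (phi x a)) x /\
  continuous (fun x => du a x * cos (phi x a)) x.
Proof.
intros Ha Hx HN.
unfold du, phi in *; unfold Nf in *.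
repeat split; apply (@ex_derive_continuous R_AbsRing R_NormedModule); auto_derive; repeat split; auto; try lra; intro H; nra.
Qed.
Lemma ibp (g h k : R -> R) y c M :
 y <= c -> (forall x, y <= x <= c -> is_derive g x (h x + k x)) ->
 (forall x, y<=x<=c -> continuous (fun x => h x + k x) x) -> (forall x, y<=x<=c -> continuous k x) ->
 (forall x, y<=x<=c -> Rabs (k x) <= M) ->
 exists L, is_RInt h y c L /\ Rabs L <= Rabs (g c) + Rabs (g y) + (c - y) * M.
Proof.
intros Hyc Hd Hc Hk HM.
assert (H1 : is_RInt (fun x => h x + k x) y c (minus (g c) (g y))).
{ apply (is_RInt_derive g (fun x => h x + k x)); rewrite Rmin_left, Rmax_right; [exact Hd | exact Hyc | exact Hyc | exact Hc | exact Hyc | exact Hyc]. }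
assert (Ek : ex_RInt k y c).
{ apply (@ex_RInt_continuous R_CompleteNormedModule). rewrite Rmin_left, Rmax_right; [exact Hk | exact Hyc | exact Hyc]. }
destruct Ek as [Lk HLk].

assert (HB : norm Lk <= (c - y) * M) by exact (norm_RInt_le_const k y c Lk M Hyc HM HLk).

exists (minus (minus (g c) (g y)) Lk). split.
- apply (is_RInt_ext (fun x => minus (h x + k x) (k x))).
  + intros x _. change (h x + k x - k x = h x). ring.
  + apply (is_RInt_minus (V:=R_NormedModule)); [exact H1 | exact HLk].
- change (Rabs Lk <= (c - y) * M) in HB. 
  change (Rabs (g c + - g y + - Lk) <= Rabs (g c) + Rabs (g y) + (c - y) * M). 
  pose proof (Rabs_triang (g c + - g y) (- Lk)).
  pose proof (Rabs_triang (g c) (- g y)).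
  rewrite Rabs_Ropp in H, H0. lra.
Qed.
Lemma J_lower (J : R -> Prop) : compact J -> (forall a, J a -> a <> 0) -> exists m, 0 < m /\ forall a, J a -> m <= Rabs a.
Proof.
intros Hc H0. pose proof (compact_P2 J Hc) as Hcl. unfold closed_set, open_set in Hcl.
destruct (Hcl 0) as [d Hd].
{ unfold complementary. intro HJ. apply (H0 0 HJ). reflexivity. }
exists d. split; [apply cond_pos|].
intros a Ha. destruct (Rle_or_lt d (Rabs a)) as [h|h]; auto.
exfalso. apply (Hd a). unfold disc. rewrite Rminus_0_r. exact h. exact Ha.
Qed.

Lemma lim_le X B D y : y < 1 -> 0 <= D -> (forall c, y < c < 1 -> X <= B + D * (1-c)) -> X <= B.
Proof.
intros Hy HD H. destruct (Rle_or_lt X B) as [h|h]; auto. exfalso.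
set (e := Rmin ((1-y)/2) ((X-B)/(2*(D+1)))).
assert (He1 : 0 < e) by (unfold e; apply Rmin_pos; [lra| apply Rdiv_lt_0_compat; lra]).
assert (He2 : e <= (1-y)/2) by apply Rmin_l.
assert (He3 : e <= (X-B)/(2*(D+1))) by apply Rmin_r.
specialize (H (1 - e)). assert (X <= B + D * e) by (replace e with (1 - (1-e)) by ring; apply H; lra).
assert (D * e <= D * ((X-B)/(2*(D+1)))) by (apply Rmult_le_compat_l; lra).
assert (D * ((X-B)/(2*(D+1))) < X - B).
{ apply (Rmult_lt_reg_r (2*(D+1))). lra. field_simplify; [|lra]. nra. }
lra.
Qed.

Lemma Cmod_le2 (z : C) B : Rabs (fst z) <= B -> Rabs (snd z) <= B -> Cmod z <= 2 * B.
Proof.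
intros H1 H2. pose proof (Cmod_2Rmax z).
assert (Rmax (Rabs (fst z)) (Rabs (snd z)) <= B) by (apply Rmax_lub; auto).
assert (sqrt 2 <= 2).
{ rewrite <- (sqrt_square 2) at 2 by lra. apply sqrt_le_1_alt. lra. }
assert (0 <= Rmax (Rabs (fst z)) (Rabs (snd z))) by (eapply Rle_trans; [apply Rabs_pos| apply Rmax_l]).
assert (sqrt 2 * Rmax (Rabs (fst z)) (Rabs (snd z)) <= 2 * B).
{ apply Rmult_le_compat; auto. apply sqrt_pos. }
lra.
Qed.
Lemma Lub_all : Lub_Rbar (fun _ : R => True) = p_infty.
Proof.
  apply is_lub_Rbar_unique. split.
  - intros x _. simpl. exact I.
  - intros l Hl. destruct l as [r| |]; simpl; auto.
    specialize (Hl (r+1) I). simpl in Hl. lra.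
    specialize (Hl 0 I). simpl in Hl. exact Hl.
Qed.
Lemma RInt_bad (f : R -> C) a b : ~ ex_RInt (V:=C_R_CompleteNormedModule) f a b -> RInt (V := C_R_CompleteNormedModule) f a b = (0,0).
Proof.
intros H. unfold RInt, iota. simpl. unfold C_complete_lim, R_complete_lim.
assert (E: forall (P: C -> Prop), (forall x : C, is_RInt f a b x -> P x)).
{ intros P x Hx. exfalso. apply H. exists x. exact Hx. }
change (C_complete_lim (fun A : C -> Prop => forall x : C, is_RInt f a b x -> A x) = (0, 0)). unfold C_complete_lim, R_complete_lim.
f_equal; (erewrite Lub_Rbar_eqset; [rewrite Lub_all; reflexivity | intros x; split; intros _; [exact I | intros x0 Hx0; exfalso; apply H; exists x0; exact Hx0]]).

Qed.
Lemma norm_C (z : C) : @norm _ C_R_NormedModule z = Cmod z.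
Proof. unfold norm; simpl. unfold prod_norm, Cmod. simpl. unfold norm; simpl. unfold abs; simpl. rewrite !Rmult_1_r, <- !Rabs_mult, !Rabs_right; try reflexivity; apply Rle_ge; apply Rle_0_sqr. Qed.
Lemma Cmod_expi t : Cmod (cos t, sin t) = 1.
Proof. unfold Cmod; simpl. transitivity (sqrt 1); [|apply sqrt_1]. f_equal. pose proof (sin2_cos2 t). unfold Rsqr in H. lra. Qed.

Definition Kc m := 14 * /m + 4 * /m^3.

Lemma near_case a m y : 0 < m -> m <= Rabs a -> 0 <= y < 1 -> 1 - y <= m/2 ->
  ex_RInt (V := C_R_CompleteNormedModule) (fun x => expi (- phi x a)) y 1 ->
  Cmod (RInt (V := C_R_CompleteNormedModule) (fun x => expi (- phi x a)) y 1)
    <= 2 * (/m + Kc m) * (1 - y)^3.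
Proof.
intros Hm Ha Hy Hs Hex.
assert (Ha0 : a <> 0) by (intro e; subst; rewrite Rabs_R0 in Ha; lra).
assert (Hmi : 0 < /m) by (apply Rinv_0_lt_compat; lra).
assert (HK : 0 < Kc m) by (unfold Kc; assert (0 < /m^3) by (apply Rinv_0_lt_compat; apply pow_lt; lra); lra).
assert (HN : forall x, y <= x < 1 -> Nf a (1-x) <> 0).
{ intros x Hx. destruct (Nf_bound a m (1-x) Hm Ha) as [_ N2]; try lra.
  assert (0 < a*a) by nra. lra. }
apply (lim_le _ _ (2 * /m + 2) y); [lra | lra |].
intros c Hc.
set (f := fun x => expi (- phi x a)).
assert (Ex1 : ex_RInt (V := C_R_CompleteNormedModule) f y c) by (apply (ex_RInt_Chasles_1 (V:=C_R_CompleteNormedModule) f y c 1); [lra | exact Hex]).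
assert (Ex2 : ex_RInt (V := C_R_CompleteNormedModule) f c 1) by (apply (ex_RInt_Chasles_2 (V:=C_R_CompleteNormedModule) f y c 1); [lra | exact Hex]).
rewrite <- (RInt_Chasles (V:=C_R_CompleteNormedModule) f y c 1 Ex1 Ex2).
assert (T : Cmod (RInt (V := C_R_CompleteNormedModule) f c 1) <= 2 * (1 - c)).
{ destruct Ex2 as [L2 HL2]. rewrite (is_RInt_unique (V:=C_R_CompleteNormedModule) _ _ _ _ HL2).
  pose proof (norm_RInt_le_const (V := C_R_NormedModule) f c 1 L2 1 ltac:(lra)) as HB.
  assert (norm L2 <= (1 - c) * 1).
  { apply HB; [|exact HL2]. intros x _. rewrite norm_C. unfold f, expi. rewrite Cmod_expi. lra. }
  rewrite norm_C in H. lra. }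
assert (Hd : forall x, y <= x <= c -> Rabs (du a x * sin (phi x a)) <= Kc m * (1-y)^2 /\ Rabs (du a x * cos (phi x a)) <= Kc m * (1-y)^2).
{ intros x Hx. pose proof (du_bound a m x Hm Ha ltac:(lra) ltac:(lra) ltac:(lra)) as B.
  fold (Kc m) in B.
  assert (Kc m * (1-x)^2 <= Kc m * (1-y)^2) by (apply Rmult_le_compat_l; [lra | apply pow_incr; lra]).
  rewrite !Rabs_mult. pose proof (Rabs_pos (du a x)).
  split; [pose proof (SIN_bound (phi x a)) as S | pose proof (COS_bound (phi x a)) as S];
  assert (Rabs (_ (phi x a)) <= 1) as S' by (apply Rabs_le; exact S);
  assert (Rabs (du a x) * Rabs (_ (phi x a)) <= Rabs (du a x) * 1) by (apply Rmult_le_compat_l; auto; exact S'); lra. }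
destruct (ibp (fun x => uu a x * sin (phi x a)) (fun x => cos (- phi x a)) (fun x => du a x * sin (phi x a)) y c (Kc m * (1-y)^2))
  as [L1 [HL1 BL1]].
{ lra. }
{ intros x Hx. apply der1; [auto | lra | apply HN; lra]. }
{ intros x Hx. apply (cont1 a x); [auto | lra | apply HN; lra]. }
{ intros x Hx. apply (cont1 a x); [auto | lra | apply HN; lra]. }
{ intros x Hx. apply Hd; auto. }
destruct (ibp (fun x => uu a x * cos (phi x a)) (fun x => sin (- phi x a)) (fun x => du a x * cos (phi x a)) y c (Kc m * (1-y)^2))
  as [L2 [HL2 BL2]].
{ lra. }
{ intros x Hx. apply der2; [auto | lra | apply HN; lra]. }
{ intros x Hx. apply (cont1 a x); [auto | lra | apply HN; lra]. }
{ intros x Hx. apply (cont1 a x); [auto | lra | apply HN; lra]. }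
{ intros x Hx. apply Hd; auto. }
assert (HI : is_RInt (V := C_R_NormedModule) f y c (L1, L2)).
{ apply (is_RInt_fct_extend_pair (U := R_NormedModule) (V := R_NormedModule) f y c L1 L2); assumption. }
rewrite (is_RInt_unique (V:=C_R_CompleteNormedModule) _ _ _ _ HI).
assert (Bu : forall x, y <= x <= c -> Rabs (uu a x * sin (phi x a)) <= (1-x)^3 * /m /\ Rabs (uu a x * cos (phi x a)) <= (1-x)^3 * /m).
{ intros x Hx. pose proof (uu_bound a m x Hm Ha ltac:(lra) ltac:(lra) ltac:(lra)) as B.
  rewrite !Rabs_mult. pose proof (Rabs_pos (uu a x)).
  split; [pose proof (SIN_bound (phi x a)) as S | pose proof (COS_bound (phi x a)) as S];
  assert (Rabs (_ (phi x a)) <= 1) as S' by (apply Rabs_le; exact S);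
  assert (Rabs (uu a x) * Rabs (_ (phi x a)) <= Rabs (uu a x) * 1) by (apply Rmult_le_compat_l; auto; exact S'); lra. }
destruct (Bu c ltac:(lra)) as [Bc1 Bc2]. destruct (Bu y ltac:(lra)) as [By1 By2].
assert (P1 : (1-c)^3 <= 1 - c) by (assert (0 < 1-c) by lra; assert ((1-c)^2 <= 1) by (rewrite <- (pow1 2); apply pow_incr; lra); simpl; nra).
assert (P2 : (c - y) * (Kc m * (1 - y)^2) <= Kc m * (1-y)^3).
{ replace (Kc m * (1-y)^3) with ((1-y) * (Kc m * (1-y)^2)) by ring. apply Rmult_le_compat_r; [|lra].
  apply Rmult_le_pos; [lra| apply pow_le; lra]. }
assert (P3 : (1-c)^3 * /m <= (1-c) * /m) by (apply Rmult_le_compat_r; lra).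
assert (Cmod (L1, L2) <= 2 * ((1-c) * /m + (/m + Kc m) * (1-y)^3)).
{ apply Cmod_le2; simpl; lra. }
pose proof (Cmod_triangle (L1, L2) (RInt (V := C_R_CompleteNormedModule) f c 1)).
change (Cmod (plus (L1, L2) (RInt (V := C_R_CompleteNormedModule) f c 1)) <=
  2 * (/ m + Kc m) * (1 - y) ^ 3 + (2 * / m + 2) * (1 - c)).
change (plus (L1, L2) (RInt (V := C_R_CompleteNormedModule) f c 1)) with (Cplus (L1, L2) (RInt (V := C_R_CompleteNormedModule) f c 1)).
lra.
Qed.

Lemma far_case a m y : 0 < m -> 0 <= y < 1 -> m/2 < 1 - y ->
  ex_RInt (V := C_R_CompleteNormedModule) (fun x => expi (- phi x a)) y 1 ->
  Cmod (RInt (V := C_R_CompleteNormedModule) (fun x => expi (- phi x a)) y 1)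
    <= 4 * /m^2 * (1 - y)^3.
Proof.
intros Hm Hy Hs [L HL].
rewrite (is_RInt_unique (V:=C_R_CompleteNormedModule) _ _ _ _ HL).
assert (norm L <= (1 - y) * 1).
{ apply (norm_RInt_le_const (V := C_R_NormedModule) (fun x => expi (- phi x a)) y 1 L 1 ltac:(lra)); [|exact HL].
  intros x _. rewrite norm_C. unfold expi. rewrite Cmod_expi. lra. }
rewrite norm_C in H.
assert (m^2 <= 4 * (1-y)^2) by nra.
assert (0 < m^2) by nra.
assert (1 <= 4 * /m^2 * (1-y)^2).
{ apply (Rmult_le_reg_l (m^2)); auto. field_simplify; lra. }
replace (4 * / m ^ 2 * (1 - y) ^ 3) with ((4 * /m^2 * (1-y)^2) * (1-y)) by ring.
nra.
Qed.

Theorem lemma3p33 (J : R -> Prop) (HJc : compact J) (HJ0 : forall a, J a -> a <> 0) :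
  exists C : R, 0 < C /\
    forall y alpha, 0 <= y < 1 -> J alpha ->
      Cmod (RInt (V := C_R_CompleteNormedModule)
              (fun x => expi (- phi x alpha)) y 1) <= C * (1 - y) ^ 3.
Proof.
destruct (J_lower J HJc HJ0) as [m [Hm HmJ]].
assert (Hmi : 0 < /m) by (apply Rinv_0_lt_compat; lra).
assert (HK : 0 < Kc m) by (unfold Kc; assert (0 < /m^3) by (apply Rinv_0_lt_compat; apply pow_lt; lra); lra).
assert (H2 : 0 < /m^2) by (apply Rinv_0_lt_compat; apply pow_lt; lra).
exists (2 * (/m + Kc m) + 4 * /m^2 + 1). split; [lra|].
intros y a Hy Ha.
assert (Hp : 0 < (1-y)^3) by (apply pow_lt; lra).
destruct (classic (ex_RInt (V := C_R_CompleteNormedModule) (fun x => expi (- phi x a)) y 1)) as [Hex|Hnex].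
- destruct (Rle_or_lt (1 - y) (m/2)) as [Hs|Hs].
  + pose proof (near_case a m y Hm (HmJ a Ha) Hy Hs Hex). nra.
  + pose proof (far_case a m y Hm Hy Hs Hex). nra.
- rewrite (RInt_bad _ _ _ Hnex). replace (Cmod (0,0)) with 0 by (symmetry; exact Cmod_0). nra.
Qed.
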